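(* There is a numerical constant $c>0$ such that for every even integer $n\ge 2$ and every $\alpha>0$: if $(\sigma_0,\dots,\sigma_{n-1})$ is a uniformly random permutation of the vector consisting of $n/2$ entries equal to $1$ and $n/2$ entries equal to $-1$, then \[ \mathbb{E}\left[\left(\sum_{i=0}^{n-1}\sigma_i(1-\alpha)^i\right)^2\right]\;\ge\;c\cdot\min\left\{1+\frac1\alpha,\ n^3\alpha^2\right\}. \] *)

(* Defs.v *)
From HB Require Import structures.
From mathcomp Require Import all_boot all_order all_algebra all_fingroup.
Set Implicit Arguments. Unset Strict Implicit. Unset Printing Implicit Defensive.
Import Order.TTheory GRing.Theory Num.Theory.
Local Open Scope ring_scope.

Definition balanced_vec (R : nzRingType) (n : nat) (i : 'I_n) : R :=
  if (i < n./2)%N then 1 else -1.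

(* E[(sum_i sigma_i (1-alpha)^i)^2] where sigma = v o s for s a uniformly
   random permutation in 'S_n of the balanced vector v. *)
Definition perm_energy (R : fieldType) (n : nat) (alpha : R) : R :=
  (n`!%:R)^-1 *
  \sum_(s : 'S_n) (\sum_(i < n) balanced_vec R (s i) * (1 - alpha) ^+ i) ^+ 2.

(* Main.v *)
Require Import Defs.
From HB Require Import structures.
From mathcomp Require Import all_boot all_order all_algebra all_fingroup.
From mathcomp Require Import ring lra.
Import Order.TTheory GRing.Theory Num.Theory.
Local Open Scope ring_scope.

Lemma bv_sq (R : realFieldType) n (k : 'I_n) : balanced_vec R k * balanced_vec R k = 1.
Proof. by rewrite /balanced_vec; case: ifP => _; rewrite ?mulr1 ?mulrNN ?mulr1. Qed.

Lemma bv_sum (R : realFieldType) n : ~~ odd n -> \sum_(k < n) balanced_vec R k = 0.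
Proof.
move=> ev.
rewrite (eq_bigr (fun k : 'I_n => (fun j : nat => if (j < n./2)%N then (1:R) else -1) k)) //.
rewrite -(big_mkord xpredT (fun j : nat => if (j < n./2)%N then (1:R) else -1)).
have hm : (n./2 <= n)%N by rewrite -{2}(odd_double_half n) (negbTE ev) add0n -addnn leq_addr.
rewrite (big_cat_nat (n:=n./2) (leq0n _) hm) /=.
rewrite (eq_big_nat _ _ (F2 := fun _ => 1)); last by move=> i /andP[_ ->].
rewrite [X in _ + X](eq_big_nat _ _ (F2 := fun _ => -1)); last first.
  by move=> i /andP[h _]; rewrite ltnNge h.
rewrite !sumr_const_nat.
have -> : (n - n./2 = n./2 - 0)%N.
  by rewrite subn0 -{1}(odd_double_half n) (negbTE ev) add0n -addnn addnK.
by rewrite mulNrn subrr.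
Qed.

Lemma bv_perm_sum (R : realFieldType) n (s : 'S_n) : ~~ odd n ->
  \sum_(j < n) balanced_vec R (s j) = 0.
Proof. by move=> ev; rewrite -[RHS](@bv_sum R n ev) [RHS](reindex_inj (@perm_inj _ s)). Qed.

Definition CC (R : realFieldType) n (i j : 'I_n) : R :=
  \sum_(s : 'S_n) balanced_vec R (s i) * balanced_vec R (s j).

Arguments CC R {n} i j.

Lemma CC_diag (R : realFieldType) n (i : 'I_n) : CC R i i = n`!%:R.
Proof.
rewrite /CC (eq_bigr (fun _ => 1)) => [|s _]; last by rewrite bv_sq.
by rewrite sumr_const card_Sn.
Qed.

Lemma CC_row (R : realFieldType) n (i j k : 'I_n) : i != j -> i != k ->
  CC R i j = CC R i k.
Proof.
move=> hj hk; rewrite /CC (reindex_inj (mulgI (tperm j k))) /=.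
apply: eq_bigr => s _; rewrite !permM tpermL tpermD //.
  by rewrite eq_sym.
by rewrite eq_sym.
Qed.

Lemma CC_rowsum (R : realFieldType) n (i : 'I_n) : ~~ odd n ->
  \sum_j CC R i j = 0.
Proof.
move=> ev; rewrite /CC exchange_big /=.
by apply: big1 => s _; rewrite -mulr_sumr bv_perm_sum // mulr0.
Qed.

Lemma CC_off (R : realFieldType) n (i j : 'I_n) : ~~ odd n -> i != j ->
  CC R i j * (n.-1)%:R = - n`!%:R.
Proof.
move=> ev hij.
have := @CC_rowsum R n i ev; rewrite (bigD1 i) //= CC_diag.
rewrite (eq_bigr (fun _ => CC R i j)) => [|k hk]; last by apply: CC_row; rewrite // eq_sym.
rewrite sumr_const cardC1 card_ord => h.
by rewrite mulr_natr; apply/eqP; rewrite -addr_eq0 addrC h.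
Qed.

Lemma energy_formula (R : realFieldType) n (w : 'I_n -> R) : ~~ odd n -> (2 <= n)%N ->
  (n`!%:R)^-1 * \sum_(s : 'S_n) (\sum_(i < n) balanced_vec R (s i) * w i) ^+ 2
  = \sum_i w i * (w i - (\sum_j w j - w i) / (n.-1)%:R).
Proof.
move=> ev n2.
have Kn0 : (n`!%:R : R) != 0 by rewrite pnatr_eq0 -lt0n fact_gt0.
have dn0 : ((n.-1)%:R : R) != 0 by rewrite pnatr_eq0; case: n n2 {ev w Kn0} => [|[|]].
have E1 : forall s : 'S_n, (\sum_(i < n) balanced_vec R (s i) * w i) ^+ 2 =
   \sum_i \sum_j (balanced_vec R (s i) * w i) * (balanced_vec R (s j) * w j).
  move=> s; rewrite expr2 mulr_suml; apply: eq_bigr => i _; by rewrite mulr_sumr.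
rewrite (eq_bigr _ (fun s _ => E1 s)) exchange_big /=.
rewrite (eq_bigr (fun i => w i * (w i * n`!%:R + (\sum_j w j - w i) * (- n`!%:R / (n.-1)%:R)))); last first.
  move=> i _; rewrite exchange_big /=.
  rewrite (eq_bigr (fun j => w i * w j * CC R i j)); last first.
    move=> j _; rewrite /CC mulr_sumr; apply: eq_bigr => s _; ring.
  rewrite (bigD1 i) //= CC_diag.
  rewrite (eq_bigr (fun j => w i * (w j * (- n`!%:R / (n.-1)%:R)))); last first.
    move=> j hj; rewrite -mulrA; congr (_ * (_ * _)).
    have hij : i != j by rewrite eq_sym.
    by rewrite -(@CC_off R n i j ev hij) mulfK.
  by rewrite -mulr_sumr -mulr_suml [X in X - w i](bigD1 i) //=; ring.
rewrite mulr_sumr; apply: eq_bigr => i _.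
by field; apply/andP; split.
Qed.

Lemma var_lb (R : realFieldType) n (w : 'I_n -> R) : (2 <= n)%N ->
  \sum_i (w i - (\sum_j w j) / n%:R) ^+ 2 <=
  \sum_i w i * (w i - (\sum_j w j - w i) / (n.-1)%:R).
Proof.
move=> n2.
set S := \sum_j w j.
set Q := \sum_i w i * w i.
have hN : (2:R) <= n%:R by rewrite (ler_nat R 2 n).
have hd : (n.-1)%:R = n%:R - 1 :> R by rewrite -[in RHS](prednK (ltnW n2)) -natr1 addrK.
have V : \sum_i (w i - S / n%:R) ^+ 2 = Q - S * S / n%:R.
  rewrite (eq_bigr (fun i => w i * w i - w i * (2 * S / n%:R) + (S / n%:R)^+2)); last by move=> i _; ring.
  rewrite big_split sumrB /= -mulr_suml sumr_const card_ord -/S -/Q.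
  rewrite -mulr_natr. field. by rewrite pnatr_eq0 -lt0n ltnW.
have L : \sum_i w i * (w i - (S - w i) / (n.-1)%:R) = Q * (1 + (n.-1)%:R^-1) - S * S / (n.-1)%:R.
  rewrite (eq_bigr (fun i => w i * w i * (1 + (n.-1)%:R^-1) - w i * (S / (n.-1)%:R))); last by move=> i _; ring.
  by rewrite sumrB -!mulr_suml -/S -/Q mulrA.
have V0 : 0 <= Q - S * S / n%:R by rewrite -V sumr_ge0 // => i _; exact: sqr_ge0.
rewrite V L hd.
have -> : Q * (1 + (n%:R - 1)^-1) - S * S / (n%:R - 1) = (Q - S * S / n%:R) + (Q - S * S / n%:R) / (n%:R - 1).
  field. apply/andP; split; apply/negP=> /eqP h; lra.
rewrite lerDl divr_ge0 //; lra.
Qed.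

Lemma pair_ineq (R : realFieldType) (a b t : R) : (a - b)^+2 / 2 <= (a - t)^+2 + (b - t)^+2.
Proof.
have : 0 <= (a + b - 2 * t)^+2 / 2 by rewrite divr_ge0 ?sqr_ge0.
have -> : (a - t)^+2 + (b - t)^+2 = (a - b)^+2 / 2 + (a + b - 2 * t)^+2 / 2 by field.
lra.
Qed.

Lemma pairs_half (R : realFieldType) (f : nat -> R) (t : R) m :
  \sum_(0 <= i < m) (f i - f (i + m)%N)^+2 / 2 <= \sum_(0 <= i < m + m) (f i - t)^+2.
Proof.
rewrite (big_cat_nat (n:=m) (leq0n _) (leq_addr _ _)) /=.
have -> : \sum_(m <= i < m + m) (f i - t)^+2 = \sum_(0 <= i < m) (f (i + m)%N - t)^+2.
  by rewrite -{1}(add0n m) big_addn addnK.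
rewrite -big_split /=.
by apply: ler_sum => i _; apply: pair_ineq.
Qed.

Lemma pairs01 (R : realFieldType) (f : nat -> R) (t : R) n : (2 <= n)%N ->
  (f 0%N - f 1%N)^+2 / 2 <= \sum_(0 <= i < n) (f i - t)^+2.
Proof.
move=> n2; rewrite big_ltn ?(ltnW n2) // big_ltn //.
have : 0 <= \sum_(2 <= i < n) (f i - t)^+2 by apply: sumr_ge0 => i _; apply: sqr_ge0.
have := @pair_ineq R (f 0%N) (f 1%N) t. lra.
Qed.

Lemma bernoulli (R : realFieldType) (a : R) m : 0 <= a -> 1 + m%:R * a <= (1 + a) ^+ m.
Proof.
move=> a0; elim: m => [|m IH]; first by rewrite mul0r addr0 expr0.
rewrite exprS -natr1.
have h1 : 0 <= 1 + a by lra.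
have := ler_wpM2l h1 IH.
have : 0 <= m%:R * a * a by rewrite mulr_ge0 ?mulr_ge0 ?ler0n.
move=> h2 h3; apply: le_trans h3; rewrite -/(_ <= _); nra.
Qed.

Lemma y_bound (R : realFieldType) (a : R) m : 0 <= a -> a <= 1 ->
  (1 - a) ^+ m * (1 + m%:R * a) <= 1.
Proof.
move=> a0 a1.
have y0 : 0 <= (1 - a) ^+ m by rewrite exprn_ge0 // subr_ge0.
apply: le_trans (ler_wpM2l y0 (@bernoulli R a m a0)) _.
rewrite -exprMn; apply: exprn_ile1; nra.
Qed.

Lemma geom_bound (R : realFieldType) (a : R) m : 0 < a -> a < 1 ->
  (1 - (1 - a) ^+ m) ^+ 3 / (2 * a) <=
  \sum_(0 <= i < m) ((1 - a) ^+ i - (1 - a) ^+ (i + m)) ^+ 2.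
Proof.
move=> a0 a1.
set x := 1 - a; set y := x ^+ m.
have x0 : 0 < x by rewrite /x; lra.
have x1 : x < 1 by rewrite /x; lra.
have y0 : 0 <= y by rewrite exprn_ge0 // ltW.
have y1 : y <= 1 by rewrite exprn_ile1 // ltW.
have E : \sum_(0 <= i < m) (x ^+ i - x ^+ (i + m)) ^+ 2 = (1 - y) ^+ 2 * \sum_(i < m) (x ^+ 2) ^+ i.
  rewrite big_mkord mulr_sumr; apply: eq_bigr => i _.
  rewrite -exprM mulnC exprM exprD -/y; ring.
have G : (1 - x ^+ 2) * \sum_(i < m) (x ^+ 2) ^+ i = 1 - y ^+ 2.
  rewrite -[RHS]opprB -exprM mulnC exprM -/y subrX1.
  ring.
have hz : 0 < 1 - x ^+ 2 by nra.
have hz2 : 1 - x ^+ 2 <= 2 * a by rewrite /x; nra.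
have Sg : \sum_(i < m) (x ^+ 2) ^+ i = (1 - y ^+ 2) / (1 - x ^+ 2).
  by rewrite -G [(1 - x^+2) * _]mulrC mulfK // gt_eqF.
rewrite E Sg.
have h1 : (1 - y) / (2 * a) <= (1 - y ^+ 2) / (1 - x ^+ 2).
  apply: le_trans (_ : (1 - y) / (1 - x ^+ 2) <= _).
    apply: ler_wpM2l; first lra.
    by rewrite lef_pV2 ?posrE //; lra.
  apply: ler_wpM2r; first by rewrite invr_ge0 ltW.
  nra.
have -> : (1 - y) ^+ 3 / (2 * a) = (1 - y) ^+ 2 * ((1 - y) / (2 * a)) by rewrite mulrA -exprSr.
by apply: ler_wpM2l => //; apply: sqr_ge0.
Qed.

Lemma cube_le (R : realFieldType) (q z : R) : 0 <= q -> q <= z -> q ^+ 3 <= z ^+ 3.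
Proof.
move=> q0 qz; rewrite ler_pXn2r // nnegrE //; lra.
Qed.

Lemma final_small (R : realFieldType) (a : R) (m : nat) (z : R) : 0 < a -> a < 1 ->
  (0 < m)%N -> 0 <= z -> m%:R * a <= z * (1 + m%:R * a) ->
  (256%:R)^-1 * Num.min (1 + a^-1) (((m + m)%N%:R) ^+ 3 * a ^+ 2) <= z ^+ 3 / (2 * a) / 2.
Proof.
move=> a0 a1 m0 z0 hz.
set M : R := m%:R.
have M0 : 0 < M by rewrite /M ltr0n.
have hu : 0 < M * a by rewrite mulr_gt0.
have ia1 : 1 <= a^-1 by rewrite invf_ge1 // ltW.
have -> : z ^+ 3 / (2 * a) / 2 = z ^+ 3 * (4 * a)^-1.
  by field; rewrite gt_eqF.
have ia0 : 0 < (4 * a)^-1 by rewrite invr_gt0 mulr_gt0.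
case: (lerP (M * a) 1) => hu1.
- have hq : M * a / 2 <= z by nra.
  apply: (le_trans (y := (M * a / 2) ^+ 3 * (4 * a)^-1)); last first.
    by apply: ler_wpM2r; [exact: ltW | apply: cube_le => //; lra].
  apply: (le_trans (y := (256%:R)^-1 * (((m + m)%N%:R) ^+ 3 * a ^+ 2))).
    apply: ler_wpM2l; first by rewrite invr_ge0 ler0n.
    by rewrite ge_min lexx orbT.
  rewrite natrD -/M le_eqVlt; apply/orP; left; apply/eqP.
  by field; rewrite gt_eqF.
- have hq : 1 / 2 <= z by nra.
  apply: (le_trans (y := (1 / 2) ^+ 3 * (4 * a)^-1)); last first.
    by apply: ler_wpM2r; [exact: ltW | apply: cube_le => //; lra].
  apply: (le_trans (y := (256%:R)^-1 * (1 + a^-1))).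
    apply: ler_wpM2l; first by rewrite invr_ge0 ler0n.
    by rewrite ge_min lexx.
  have -> : (1 / 2) ^+ 3 * (4 * a)^-1 = (256%:R)^-1 * (8 * a^-1).
    by field; rewrite gt_eqF.
  apply: ler_wpM2l; first by rewrite invr_ge0 ler0n.
  lra.
Qed.

Lemma final_big (R : realFieldType) (a B : R) : 1 <= a ->
  (256%:R)^-1 * Num.min (1 + a^-1) B <= a ^+ 2 / 2.
Proof.
move=> a1.
have ia : a^-1 <= 1 by rewrite invf_le1 //; lra.
apply: (le_trans (y := (256%:R)^-1 * (1 + a^-1))).
  apply: ler_wpM2l; first by rewrite invr_ge0 ler0n.
  by rewrite ge_min lexx.
have h : (256%:R : R)^-1 * 2 <= 1 / 2.
  rewrite ler_pdivrMl ?ltr0n //.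
  have -> : (256%:R : R) * (1 / 2) = 128 by field.
  lra.
have h2 : (256%:R : R)^-1 * (1 + a^-1) <= (256%:R)^-1 * 2.
  by apply: ler_wpM2l; [rewrite invr_ge0 ler0n | lra].
nra.
Qed.

Theorem lemma1 :
  exists c : rat, 0 < c /\
    forall (R : realFieldType) (n : nat) (alpha : R),
      ~~ odd n -> (2 <= n)%N -> 0 < alpha ->
      perm_energy n alpha >=
        ratr c * Num.min (1 + alpha^-1) ((n%:R) ^+ 3 * alpha ^+ 2).
Proof.
exists (256%:R)^-1; split; first by rewrite invr_gt0 ltr0n.
move=> R n a ev n2 a0.
rewrite fmorphV rmorph_nat.
rewrite /perm_energy (@energy_formula R n (fun i : 'I_n => (1 - a) ^+ i) ev n2).
apply: le_trans (@var_lb R n (fun i : 'I_n => (1 - a) ^+ i) n2).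
set t := _ / _.
rewrite -(big_mkord xpredT (fun i => ((1 - a) ^+ i - t) ^+ 2)).
case: (lerP 1 a) => ha.
- apply: le_trans (@pairs01 R (fun i => (1 - a) ^+ i) t n n2).
  rewrite /= expr0 expr1 (_ : (1:R) - (1 - a) = a); last by ring.
  exact: final_big.
- set m := n./2.
  have hn : n = (m + m)%N by rewrite addnn /m -{1}(odd_double_half n) (negbTE ev) add0n.
  have m0 : (0 < m)%N by move: n2; rewrite hn; case: (m).
  rewrite [in X in _ <= X]hn.
  apply: le_trans (@pairs_half R (fun i => (1 - a) ^+ i) t m).
  rewrite -mulr_suml.
  apply: le_trans (ler_wpM2r _ (@geom_bound R a m a0 ha)); last by rewrite invr_ge0 ler0n.
  rewrite [in X in X <= _]hn.
  apply: final_small => //.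
    rewrite subr_ge0 exprn_ile1 //; lra.
  have := @y_bound R a m (ltW a0) (ltW ha).
  nra.
Qed.
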